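(* There exist supplementary difference sets in $\mathbb{Z}_{59}$ with parameters $(59;28,22;21)$; that is, there exist subsets $X,Y\subseteq\mathbb{Z}_{59}$ with $|X|=28$, $|Y|=22$ such that for every nonzero $c\in\mathbb{Z}_{59}$, the number of ordered pairs $(a,b)\in X\times X$ with $a-b\equiv c\pmod{59}$ plus the number of ordered pairs $(a,b)\in Y\times Y$ with $a-b\equiv c\pmod{59}$ equals $21$.
   Context: $\mathbb{Z}_v$ denotes the ring of integers modulo $v$. Subsets $X_1,\dots,X_t\subseteq\mathbb{Z}_v$ with $|X_i|=k_i$ are supplementary difference sets (SDS) with parameters $(v;k_1,\dots,k_t;\lambda)$ if for every nonzero $c\in\mathbb{Z}_v$ there are exactly $\lambda$ ordered triples $(a,b,i)$ with $a,b\in X_i$ and $a-b\equiv c\pmod v$. *)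

(* Defs.v *)
From HB Require Import structures.
From mathcomp Require Import all_boot all_order all_algebra.
Set Implicit Arguments. Unset Strict Implicit. Unset Printing Implicit Defensive.
Import GRing.Theory.
Local Open Scope ring_scope.

Definition diff_count (v : nat) (X : {set 'Z_v}) (c : 'Z_v) : nat :=
  #|[set p : 'Z_v * 'Z_v | (p.1 \in X) && (p.2 \in X) && (p.1 - p.2 == c)]|.

Definition is_SDS (v : nat) (ks : seq nat) (lambda : nat)
  (Xs : seq {set 'Z_v}) : Prop :=
  map (fun X : {set 'Z_v} => #|X|) Xs = ks /\
  forall c : 'Z_v, c != 0 ->
    sumn (map (fun X : {set 'Z_v} => diff_count X c) Xs) = lambda.

(* Main.v *)
Require Import Defs.
From mathcomp Require Import all_boot all_order all_algebra.
Import GRing.Theory.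

Lemma dc_eq (v : nat) (X : {set 'Z_v}) c :
  diff_count X c = #|[pred x : 'Z_v | (x \in X) && (x - c \in X)%R]|.
Proof.
rewrite /diff_count.
have -> : [set p : 'Z_v * 'Z_v | (p.1 \in X) && (p.2 \in X) && (p.1 - p.2 == c)%R]
   = (fun x => (x, x - c)%R) @: [set x | (x \in X) && (x - c \in X)%R].
  apply/setP => -[a b]; rewrite inE /=.
  apply/idP/imsetP.
    case/andP => /andP[Ha Hb] /eqP Hc; exists a; first by rewrite inE Ha -Hc opprB addrC subrK Hb.
    by rewrite -Hc opprB addrC subrK.
  by case=> x; rewrite inE => /andP[Hx Hy] [-> ->]; rewrite Hx Hy opprB addrC subrK eqxx.
rewrite card_imset; last by move=> x y [].
by apply: eq_card => x; rewrite !inE.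
Qed.

Lemma card_ord_pred n (P : pred nat) : #|[pred x : 'I_n | P (val x)]| = count P (iota 0 n).
Proof.
by rewrite cardE /enum_mem size_filter -enumT /= -val_enum_ord count_map.
Qed.

Definition setof (s : seq nat) : {set 'Z_59} := [set x : 'Z_59 | val x \in s].

Lemma val_sub59 (x c : 'Z_59) : val (x - c)%R = (x + (59 - c) %% 59) %% 59.
Proof. by []. Qed.

Definition dcnat (s : seq nat) (c : nat) :=
  count (fun n => (n \in s) && (((n + (59 - c) %% 59) %% 59) \in s)) (iota 0 59).

Lemma dc_setof s (c : 'Z_59) : diff_count (setof s) c = dcnat s c.
Proof.
rewrite dc_eq /dcnat -card_ord_pred.
by apply: eq_card => x; rewrite !inE val_sub59.
Qed.

Lemma card_setof s : #|setof s| = count (mem s) (iota 0 59).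
Proof. rewrite -card_ord_pred; apply: eq_card => x; by rewrite !inE. Qed.

Lemma sds_of sX sY :
  [&& count (mem sX) (iota 0 59) == 28, count (mem sY) (iota 0 59) == 22 &
      all (fun c => dcnat sX c + dcnat sY c == 21) (iota 1 58)] ->
  is_SDS [:: 28; 22] 21 [:: setof sX; setof sY].
Proof.
case/and3P => /eqP H1 /eqP H2 /allP H3; split; first by rewrite /= !card_setof H1 H2.
move=> c Hc /=; rewrite !dc_setof addn0; apply/eqP/H3.
rewrite mem_iota /=; have := ltn_ord c; rewrite lt0n.
have -> : (nat_of_ord c != 0) = (c != 0%R) by [].
by rewrite Hc => ->.
Qed.

Definition sX : seq nat := [:: 1; 5; 7; 8; 11; 12; 13; 15; 16; 17; 19; 20; 22; 28; 29; 30; 31; 33; 34; 35; 39; 40; 41; 42; 47; 50; 55; 57].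
Definition sY : seq nat := [:: 1; 3; 5; 6; 7; 10; 12; 13; 16; 17; 21; 29; 30; 31; 34; 37; 39; 46; 49; 50; 52; 58].

Theorem mainTheorem7 :
  exists X Y : {set 'Z_59}, is_SDS [:: 28; 22]%N 21 [:: X; Y].
Proof.
exists (setof sX), (setof sY).
apply: sds_of.
by vm_compute.
Qed.
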